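(* Let $1\le m<n$. Fix $\mathbf s$ and valuations $v_1,\dots,v_n$, rename the bidders so that $v_1(\mathbf s)\ge\cdots\ge v_n(\mathbf s)$, and let $k=\max\{i:v_i(\mathbf s)>v_m(\mathbf s)/2\}$. Then for every $i\in[n]$, $$\mathbb E_{r,\pi}[c^m_i]\le\frac{m}{i(i+1)}+\frac{m}{k+1}+\sum_{j\in[k]\setminus\{i\}}\frac{m}{j(j+1)}\log_2^\dagger\!\left(\frac{v_i(\mathbf s)}{\underline v_j^{(i)}(\mathbf s)}\right).$$
   Context: $n$ bidders, signals $s_i\in S_i\subseteq\mathbb R$, valuations $v_i:\mathbf S\to\mathbb R_{>0}$. Lower estimates $\underline v_j^{(i)}(\mathbf s)=\inf_{o_i\in S_i}v_j(o_i,\mathbf s_{-i})$. $\log_2^\dagger(\alpha)=\max(0,\min(1,\log_2\alpha))$, with $a/0=\infty$, $\log_2\infty=\infty$. For $r\in[0,1)$, $w>0$: $f_r(w)=2^{r+k'}$ for the integer $k'$ with $2^{r+k'}\le w<2^{r+k'+1}$; $f_r(0)=0$. For a permutation $\pi$ of $[n]$, $a$ associated with bidder $i$ and $b$ with bidder $j$: $a>_\pi b$ iff $a>b$, or $a=b$ and $\pi(i)>\pi(j)$. $c^m_i(r,\pi)=1$ iff $f_r(v_i(\mathbf s))>_\pi f_r(\underline v_j^{(i)}(\mathbf s))$ for at least $n-m$ bidders $j\ne i$, else $0$; $r\sim U[0,1)$, $\pi$ uniform, independent. *)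

(* Defs.v *)
From HB Require Import structures.
From mathcomp Require Import all_boot all_order all_algebra all_fingroup.
From mathcomp Require Import all_classical all_reals all_analysis.
Set Implicit Arguments. Unset Strict Implicit. Unset Printing Implicit Defensive.
Import Order.TTheory GRing.Theory Num.Theory.
Local Open Scope ring_scope.
Local Open Scope classical_set_scope.

Section AuctionDefs.
Variables (R : realType) (n : nat).

Definition upd (s : 'I_n -> R) (i : 'I_n) (o : R) : 'I_n -> R :=
  fun l => if l == i then o else s l.

Definition lower_est (S : 'I_n -> set R) (v : 'I_n -> ('I_n -> R) -> R)
  (s : 'I_n -> R) (i j : 'I_n) : R :=
  inf [set v j (upd s i o) | o in S i].

Definition log2 (x : R) : R := ln x / ln 2.

(* log2^dagger (a / b) = max(0, min(1, log2 (a/b))), with a/0 = oo, log2 oo = oo *)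
Definition log2dag_ratio (a b : R) : R :=
  if b == 0 then 1 else Num.max 0 (Num.min 1 (log2 (a / b))).

(* f_r(w) = 2^(r+k') for the integer k' with 2^(r+k') <= w < 2^(r+k'+1),
   i.e. k' = floor(log2 w - r); f_r(0) = 0 *)
Definition fr (r w : R) : R :=
  if w <= 0 then 0 else 2 `^ (r + (Num.floor (log2 w - r))%:~R).

Definition gtpi (p : {perm 'I_n}) (a : R) (i : 'I_n) (b : R) (j : 'I_n) : bool :=
  (b < a) || ((a == b) && (p j < p i)%N).

Definition cm (S : 'I_n -> set R) (v : 'I_n -> ('I_n -> R) -> R)
  (s : 'I_n -> R) (mm : nat) (i : 'I_n) (r : R) (p : {perm 'I_n}) : R :=
  if (n - mm <= #|[set j : 'I_n | (j != i) &&
        gtpi p (fr r (v i s)) i (fr r (lower_est S v s i j)) j]|)%N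
  then 1 else 0.

Definition Ecm (S : 'I_n -> set R) (v : 'I_n -> ('I_n -> R) -> R)
  (s : 'I_n -> R) (mm : nat) (i : 'I_n) : R :=
  (n`!%:R)^-1 * \sum_(p : {perm 'I_n})
     Rintegral (@lebesgue_measure R) [set r : R | 0 <= r < 1]
               (fun r => cm S v s mm i r p).

(* k = max { i (1-based) : v_i(s) > v_m(s)/2 }, m given as a 0-based index *)
Definition kidx (vals : 'I_n -> R) (m : 'I_n) : nat :=
  \max_(l < n | vals m / 2 < vals l) l.+1.

End AuctionDefs.

(* Main.v *)
Require Import Defs.
From HB Require Import structures.
From mathcomp Require Import all_boot all_order all_algebra all_fingroup.
From mathcomp Require Import all_classical all_reals all_analysis.
From mathcomp Require Import measurable_realfun.
From mathcomp Require Import ring lra zify.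
Import Order.TTheory GRing.Theory Num.Theory.

Section FC.

Section Comb.
Variable n : nat.

Definition good (A : {set 'I_n}) (M : nat) (p : {perm 'I_n}) (x : 'I_n) :=
  (#|[set y in A | p x < p y]| < M)%N.

Lemma good_per_p (A : {set 'I_n}) M p :
  (#|[set x in A | good A M p x]| <= M)%N.
Proof.
set Gd := [set x in A | good A M p x].
have [->|[x0 x0G]] := set_0Vmem Gd; first by rewrite cards0.
case: (arg_minnP (fun x => p x) x0G) => x xG xmin.
have sub : Gd :\ x \subset [set y in A | p x < p y].
  apply/fintype.subsetP => y; rewrite in_setD1 => /andP[yx yG].
  have := yG; rewrite /Gd inE => /andP[yA _]; rewrite inE yA /=.
  rewrite ltn_neqAle xmin // andbT.
  apply/negP => /eqP/val_inj/perm_inj eyx; by rewrite eyx eqxx in yx.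
have := subset_leq_card sub.
have xG' : x \in Gd := xG.
have := xG'; rewrite /Gd inE => /andP[_]; rewrite /good => gx.
rewrite (cardsD1 x Gd) xG'.
move=> h; apply: (leq_trans _ gx); rewrite add1n ltnS; exact: h.
Qed.

Lemma good_sym (A : {set 'I_n}) M (x i : 'I_n) : i \in A -> x \in A ->
  #|[set p | good A M p x]| = #|[set p | good A M p i]|.
Proof.
move=> iA xA; set t := tperm i x.
have tA : forall y, (t y \in A) = (y \in A).
  move=> y; rewrite /t; case: tpermP => [->|->|//]; by rewrite ?iA ?xA.
have -> : [set p | good A M p x] = (fun p => (t * p)%g) @^-1: [set p | good A M p i].
  apply/setP => p; rewrite !inE /good permM tpermL.
  suff -> : [set y in A | p x < (t * p)%g y] = t @^-1: [set y in A | p x < p y].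
    by rewrite card_preimset //; exact: perm_inj.
  by apply/setP => y; rewrite !inE permM tA.
by rewrite card_preimset //; exact: mulgI.
Qed.

Lemma good_count (A : {set 'I_n}) M (i : 'I_n) : i \in A ->
  (#|[set p | good A M p i]| * #|A| <= n`! * M)%N.
Proof.
move=> iA.
have -> : (#|[set p | good A M p i]| * #|A| = \sum_(x in A) #|[set p | good A M p x]|)%N.
  rewrite (eq_bigr (fun _ => #|[set p | good A M p i]|)); last first.
    by move=> x xA; exact: good_sym.
  by rewrite sum_nat_const mulnC.
have -> : (\sum_(x in A) #|[set p | good A M p x]| =
   \sum_(p : {perm 'I_n}) #|[set x in A | good A M p x]|)%N.
  rewrite (eq_bigr (fun x => \sum_(p : {perm 'I_n}) (good A M p x : nat))); last first.
    move=> x _; rewrite -sum1dep_card /= big_mkcond /=.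
    by apply: eq_bigr => p _; case: (good _ _ _ _).
  rewrite exchange_big /=; apply: eq_bigr => p _.
  rewrite -sum1dep_card big_mkcond /= [RHS]big_mkcond /=.
  by apply: eq_bigr => x _; case: (x \in A); case: (good _ _ _ _).
rewrite -card_Sn -sum_nat_const; apply: leq_sum => p _; exact: good_per_p.
Qed.
End Comb.

End FC.

Section FH.
Local Open Scope ring_scope.

Section Harm.
Variable R : realFieldType.

Definition w (j : nat) : R := ((j.+1 * j.+2)%N%:R)^-1.

Lemma wE j : w j = (j.+1%:R)^-1 - (j.+2%:R)^-1.
Proof.
rewrite /w natrM.
have h1 : (j.+1%:R : R) != 0 by rewrite pnatr_eq0.
have h2 : (j.+2%:R : R) != 0 by rewrite pnatr_eq0.
rewrite -[j.+2]addn1 natrD. field. by apply/andP; split; rewrite gt_eqF //; have := ler0n R j; lra.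
Qed.


Lemma w_ge0 j : 0 <= w j.
Proof. by rewrite /w invr_ge0 ler0n. Qed.

Lemma tele k : \sum_(j < k) w j = 1 - (k.+1%:R)^-1.
Proof.
elim: k => [|k IH]; first by rewrite big_ord0 invr1 subrr.
by rewrite big_ord_recr /= IH wE addrA subrK.
Qed.

Lemma w_le a b : (a <= b)%N -> w b <= w a.
Proof.
move=> ab; rewrite /w lef_pV2 ?posrE ?ltr0n ?muln_gt0 // ler_nat.
by apply: leq_mul; rewrite ltnS.
Qed.

Lemma seq_bound N (s : seq nat) : uniq s -> all (fun x => x < N)%N s ->
  \sum_(x <- s) w x + ((size s).+1%:R)^-1 <= 1.
Proof.
elim: N s => [|N IH] s us.
  by case: s us => [|x s] //= _ _; rewrite big_nil add0r invr1.
move=> alls.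
have [Ns|Nns] := boolP (N \in s); last first.
  apply: IH => //; apply/allP => x xs; have := allP alls x xs.
  rewrite ltnS leq_eqVlt => /orP[/eqP ex|//]; by rewrite -ex xs in Nns.
have pe := perm_to_rem Ns.
rewrite (perm_big _ pe) big_cons /= (perm_size pe) /=.
set s' := rem N s.
have us' : uniq s' by rewrite rem_uniq.
have alls' : all (fun x => x < N)%N s'.
  apply/allP => x xs'.
  have xs : x \in s by apply: (mem_rem xs').
  have := allP alls x xs; rewrite ltnS leq_eqVlt => /orP[/eqP ex|//].
  by move: xs'; rewrite ex (mem_rem_uniqF N us).
have ih := IH s' us' alls'.
have szN : (size s' <= N)%N.
  rewrite -(size_iota 0 N); apply: uniq_leq_size => // x xs'.
  by rewrite mem_iota add0n (allP alls' x xs').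
have hw := @w_le _ _ szN.
have e : w (size s') = ((size s').+1%:R)^-1 - ((size s').+2%:R)^-1 by rewrite wE.
move: hw e ih; set a := (size s').+1%:R^-1; set b := (size s').+2%:R^-1; set c := \sum_(_ <- s') _; move: a b c => a b c *; lra.
Qed.

Lemma set_bound n (D : {set 'I_n}) : \sum_(j in D) w j + ((#|D|).+1%:R)^-1 <= 1.
Proof.
rewrite -big_enum /= -(big_map (@nat_of_ord n) xpredT w) cardE -(size_map (@nat_of_ord n)).
apply: (@seq_bound n).
  by rewrite map_inj_uniq ?enum_uniq //; exact: val_inj.
by apply/allP => x /mapP [y _ ->].
Qed.

Lemma key_ineq n (k : nat) (i : 'I_n) (st : 'I_n -> bool) : (k <= n)%N ->
  ((#|[set j : 'I_n | ((j.+1 <= k)%N && (j != i)) && ~~ st j]|).+1%:R)^-1 <=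
  w i + (k.+1%:R)^-1 + \sum_(j < n | (j.+1 <= k)%N && (j != i)) w j * (if st j then 1 else 0).
Proof.
move=> kn.
set Ds := [set j : 'I_n | _].
have hb := @set_bound n Ds.
have e1 : \sum_(j < n | (j.+1 <= k)%N && (j != i)) w j * (if st j then 1 else 0) =
   \sum_(j < n | (j.+1 <= k)%N && (j != i)) w j - \sum_(j in Ds) w j.
  rewrite [X in _ = X - _](bigID st) /=.
  have -> : \sum_(j in Ds) w j = \sum_(i0 < n | ((i0.+1 <= k)%N && (i0 != i)) && ~~ st i0) w i0.
    by apply: eq_bigl => j; rewrite inE.
  rewrite addrK [RHS]big_mkcondr /=.
  by apply: eq_bigr => j _; case: (st j); rewrite ?mulr1 ?mulr0.
have e2 : \sum_(j < n | (j.+1 <= k)%N) w j = 1 - (k.+1%:R)^-1.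
  by rewrite -tele (big_ord_widen n w kn).
have e3 : \sum_(j < n | (j.+1 <= k)%N) w j <= w i + \sum_(j < n | (j.+1 <= k)%N && (j != i)) w j.
  have [ik|ik] := boolP (i.+1 <= k)%N.
    by rewrite (bigD1 i) //=.
  rewrite (eq_bigl (fun j : 'I_n => (j.+1 <= k)%N && (j != i))); last first.
    move=> j /=; case: eqP => [->|_]; by rewrite ?andbT // (negbTE ik).
  by rewrite lerDr w_ge0.
rewrite e1; move: hb e2 e3.
set a := \sum_(j in Ds) w j; set b := \sum_(j < n | (j.+1 <= k)%N) w j.
set c := \sum_(j < n | (j.+1 <= k)%N && (j != i)) w j.
set d := #|Ds|.+1%:R^-1; set e := k.+1%:R^-1.
move: a b c d e => a b c d e; lra.
Qed.

End Harm.

End FH.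

Section FP.
Local Open Scope ring_scope.

Section Point.
Variables (R : realType) (n : nat).

Lemma cond_good (M : nat) (A : R) (B : 'I_n -> R) (i : 'I_n) (k : nat) p :
  (0 < M <= n)%N ->
  (n - M <= #|[set j | (j != i) && gtpi p A i (B j) j]|)%N ->
  @good n (i |: [set j : 'I_n | ((j.+1 <= k)%N && (j != i)) && ~~ (B j < A)]) M p i.
Proof.
move=> /andP[M0 Mn] hc; rewrite /good.
set beat := [set j | _] in hc.
set Ds := [set j : 'I_n | _].
have sub : [set y in i |: Ds | (p i < p y)%N] \subset [set~ i] :\: beat.
  apply/fintype.subsetP => y; rewrite !inE => /andP[/orP[/eqP ->|]].
    by rewrite ltnn.
  move=> /andP[/andP[_ yi] nst] piy; rewrite yi /= /gtpi negb_or (negbTE nst) /=.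
  by rewrite negb_and ltnNge (ltnW piy) orbT.
have := subset_leq_card sub; rewrite cardsD cardsC1 card_ord.
have -> : [set~ i] :&: beat = beat.
  apply/finset.setIidPr/fintype.subsetP => j; rewrite !inE => /andP[-> _] //.
move=> h; apply: (leq_ltn_trans h).
have n0 : (0 < n)%N by apply: (leq_trans M0 Mn).
move: hc Mn M0 n0; set b := #|beat|; move=> *; lia.
Qed.

Lemma pointwise (M : nat) (A : R) (B : 'I_n -> R) (i : 'I_n) (k : nat) :
  (0 < M <= n)%N -> (k <= n)%N ->
  \sum_(p : {perm 'I_n})
    (if (n - M <= #|[set j | (j != i) && gtpi p A i (B j) j]|)%N then 1 else 0 : R)
  <= n`!%:R * (M%:R * w R i + M%:R * (k.+1%:R)^-1 +
     \sum_(j < n | (j.+1 <= k)%N && (j != i)) M%:R * w R j * (if B j < A then 1 else 0)).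
Proof.
move=> hM kn.
set Ds := [set j : 'I_n | ((j.+1 <= k)%N && (j != i)) && ~~ (B j < A)].
have hk := @key_ineq R n k i (fun j => B j < A) kn.
rewrite -/Ds in hk.
rewrite -big_mkcond sumr_const /=.
set c := #|_|.
have c_le : (c <= #|[set p | @good n (i |: Ds) M p i]|)%N.
  apply: subset_leq_card; apply/fintype.subsetP => p; rewrite !inE => hc.
  exact: cond_good.
have gc := @good_count n (i |: Ds) M i (setU11 i Ds).
have iDs : i \notin Ds by rewrite inE eqxx !andbF.
rewrite cardsU1 iDs add1n in gc.
have hc : (c * #|Ds|.+1 <= n`! * M)%N.
  apply: leq_trans gc; exact: leq_mul.
have hcR : (c%:R : R) * (#|Ds|.+1)%:R <= n`!%:R * M%:R.
  by rewrite -!natrM ler_nat.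
have d0 : (0 : R) < (#|Ds|.+1)%:R by rewrite ltr0n.
have hc2 : (c%:R : R) <= n`!%:R * M%:R * ((#|Ds|.+1)%:R)^-1.
  by rewrite ler_pdivlMr.
apply: (le_trans hc2); rewrite -mulrA ler_wpM2l ?ler0n //.
have -> : \sum_(j < n | (j.+1 <= k)%N && (j != i)) M%:R * w R j * (if B j < A then 1 else 0)
   = M%:R * \sum_(j < n | (j.+1 <= k)%N && (j != i)) w R j * (if B j < A then 1 else 0).
  by rewrite mulr_sumr; apply: eq_bigr => j _; rewrite mulrA.
rewrite -!mulrDr ler_wpM2l ?ler0n //.
Qed.
End Point.

End FP.

Section FA.
Local Open Scope ring_scope.
Local Open Scope classical_set_scope.

Section Anal.
Variable R : realType.
Implicit Types (a b r x y : R).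

Lemma ln2_gt0 : 0 < ln (2 : R).
Proof. by apply: ln_gt0; rewrite ltr1n. Qed.

Lemma pow2E x : (2 : R) `^ x = expR (x * ln 2).
Proof. by rewrite /powR pnatr_eq0. Qed.

Lemma pow2_lt x y : (2 : R) `^ x < 2 `^ y -> x < y.
Proof. by rewrite !pow2E ltr_expR ltr_pM2r // ln2_gt0. Qed.

Lemma pow2_le x y : x <= y -> (2 : R) `^ x <= 2 `^ y.
Proof. by move=> xy; rewrite !pow2E ler_expR ler_pM2r // ln2_gt0. Qed.

Lemma log2_le a b : 0 < a -> a <= b -> log2 a <= log2 b.
Proof.
move=> a0 ab; rewrite /log2 ler_pM2r ?invr_gt0 ?ln2_gt0 //.
by rewrite ler_ln // posrE (lt_le_trans a0 ab).
Qed.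

Lemma fr_ge0 r w : 0 <= fr r w.
Proof. by rewrite /fr; case: ifP => // _; exact: powR_ge0. Qed.

Lemma fr_le r a b : 0 < a -> a <= b -> fr r a <= fr r b.
Proof.
move=> a0 ab; rewrite /fr; rewrite (ltNge 0 a) in a0.
rewrite (negbTE a0) ifF; last by apply/negbTE; rewrite -ltNge (lt_le_trans _ ab) // ltNge.
apply: pow2_le; rewrite lerD2l ler_int le_floor // lerD2r log2_le //.
by rewrite ltNge.
Qed.

Lemma fr_strict r a b : 0 < a -> 0 < b -> fr r b < fr r a ->
  log2 b - r < (Num.floor (log2 a - r))%:~R.
Proof.
move=> a0 b0; rewrite /fr !ifF ?(lt_geF a0) ?(lt_geF b0) //.
move/pow2_lt; rewrite ltrD2l ltr_int => h.
apply: (lt_le_trans (floorD1_gt _)); rewrite ler_int.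
by rewrite lezD1.
Qed.


Lemma measurable_fr w : measurable_fun [set: R] (fun r => fr r w).
Proof.
have [hw|hw] := boolP (w <= 0).
  have -> : (fun r => fr r w) = cst 0 by apply/funext => r; rewrite /fr hw.
  exact: measurable_cst.
have -> : (fun r => fr r w) = (fun r => 2 `^ (r + (Num.floor (log2 w - r))%:~R))
  by apply/funext => r; rewrite /fr (negbTE hw).
apply: measurableT_comp; first exact: measurable_powRr.
apply: measurable_funD => //.
apply: nonincreasing_measurable => // x y xy.
by rewrite ler_int le_floor // lerD2l lerN2.
Qed.

Definition D0 : set R := [set r : R | 0 <= r < 1].

Lemma D0E : D0 = [set` `[0, 1[%R].
Proof. by apply/seteqP; split => x; rewrite /D0 /= in_itv. Qed.

Lemma mD0 : measurable D0.
Proof. by rewrite D0E; exact: measurable_itv. Qed.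

Lemma lamD0 : (@lebesgue_measure R D0 = 1%:E)%E.
Proof. by rewrite D0E lebesgue_measure_itv /= lte_fin ltr01 sube0. Qed.

Lemma lam_oc u t : u <= t -> (@lebesgue_measure R [set` `]u, t]%R] = (t - u)%:E)%E.
Proof.
move=> ut; rewrite lebesgue_measure_itv /= lte_fin.
case: ltP => h; first by rewrite EFinB.
have -> : t = u by apply/eqP; rewrite eq_le ut h.
by rewrite subrr.
Qed.


Lemma mX a b : measurable [set r : R | fr r b < fr r a].
Proof.
have := measurable_fun_ltr (measurable_fr b) (measurable_fr a).
move/(_ measurableT [set true] I); rewrite setTI.
by congr measurable; apply/seteqP; split => x /=.
Qed.

Lemma strict_measure a b : 0 < a -> 0 <= b ->
  (@lebesgue_measure R ([set r | (fr r b < fr r a)%R] `&` D0) <= (log2dag_ratio a b)%:E)%E.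
Proof.
move=> a0 b0.
have mXD := measurableI _ _ (mX a b) mD0.
have leD0 : (@lebesgue_measure R ([set r | (fr r b < fr r a)%R] `&` D0) <= 1%:E)%E.
  by rewrite -lamD0; apply: le_measure; rewrite ?inE; [exact: mXD|exact: mD0|exact: subIsetr].
rewrite /log2dag_ratio; case: eqP => [_|/eqP bn0]; first exact: leD0.

have bp : 0 < b by rewrite lt_neqAle eq_sym bn0 b0.
have -> : log2 (a / b) = log2 a - log2 b by rewrite /log2 ln_div ?posrE // mulrBl.
set al := log2 a; set be := log2 b.
have [dle0|dgt0] := leP (al - be) 0.
  have -> : [set r | fr r b < fr r a] `&` D0 = set0.
    apply/seteqP; split => // r [/= h _].
    have h1 := fr_strict _ _ _ a0 bp h.
    have h2 := floor_le (log2 a - r).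
    rewrite -/al -/be in h1 h2; lra.
  by rewrite measure0 lee_fin le_max lexx.
have [dge1|dlt1] := leP 1 (al - be).
  by rewrite (_ : Num.max 0 1 = 1) //; apply/max_idPr; exact: ler01.
rewrite (_ : Num.max 0 (al - be) = al - be); last by apply/max_idPr; exact: ltW.
set z0 := Num.floor al.
set t := al - z0%:~R; set u := be - z0%:~R.
have key : forall r, D0 r -> fr r b < fr r a -> u < r /\ (r <= t \/ u + 1 < r).
  move=> r [/andP[r0 r1]] h.
  have h1 := fr_strict _ _ _ a0 bp h; rewrite -/al -/be in h1.
  set z := Num.floor (al - r) in h1.
  have zz0 : z <= z0 by apply: le_floor; lra.
  have zle : (z%:~R : R) <= al - r by apply: floor_le.
  have zz0R : (z%:~R : R) <= z0%:~R by rewrite ler_int.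
  split; first by rewrite /u; lra.
  have [zge|zlt] := leP z0 z.
    left; have : (z0%:~R : R) <= z%:~R by rewrite ler_int.
    rewrite /t; lra.
  right; have : z + 1 <= z0 by rewrite lezD1.
  rewrite -(ler_int R) intrD /u; lra.
have [u0|u0] := leP 0 u.
  have hsub : (@lebesgue_measure R ([set r | (fr r b < fr r a)%R] `&` D0) <=
               @lebesgue_measure R [set` `]u, t]%R])%E.
    apply: le_measure; rewrite ?inE //.
    move=> r [/= h hD]; have [h1 [h2|h2]] := key r hD h.
      by rewrite /= in_itv /= h1 h2.
    by move: hD; rewrite /D0 /= => /andP[_]; lra.
  rewrite lam_oc in hsub; last by rewrite /u /t; lra.
  by apply: (le_trans hsub); rewrite lee_fin /u /t; lra.
have hsub : (@lebesgue_measure R ([set r | (fr r b < fr r a)%R] `&` D0) <=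
             @lebesgue_measure R ([set` `[0, t]%R] `|` [set` `]u + 1, 1[%R]))%E.
  apply: le_measure; rewrite ?inE //; try by apply: measurableU; exact: measurable_itv.
  move=> r [/= h hD]; have [h1 [h2|h2]] := key r hD h.
    by left; move: hD; rewrite /D0 /= in_itv /= h2 => /andP[-> _].
  by right; move: hD; rewrite /D0 /= in_itv /= h2 => /andP[_ ->].
have hU : (@lebesgue_measure R ([set` `[0, t]%R] `|` [set` `]u + 1, 1[%R]) <=
    @lebesgue_measure R [set` `[0, t]%R] + @lebesgue_measure R [set` `]u + 1, 1[%R])%E.
  by apply: measureU2; exact: measurable_itv.
have e1 : (@lebesgue_measure R [set` `[0, t]%R] = t%:E)%E.
  rewrite lebesgue_measure_itv /= lte_fin.
  have t0 : 0 <= t by rewrite /t subr_ge0 floor_le.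
  case: ltP => h; first by rewrite sube0.
  have -> : t = 0 by apply/eqP; rewrite eq_le t0 h.
  by [].
have e2 : (@lebesgue_measure R [set` `]u + 1, 1[%R] = (- u)%:E)%E.
  rewrite lebesgue_measure_itv /= lte_fin.
  have -> : (u + 1 < 1) = true by apply/idP; lra.
  by rewrite -EFinB; congr EFin; lra.
rewrite e1 e2 in hU.
apply: (le_trans hsub); apply: (le_trans hU).
by rewrite -EFinD lee_fin /t /u; lra.
Qed.


Lemma lower_ge0 n (S : 'I_n -> set R) (v : 'I_n -> ('I_n -> R) -> R) (s : 'I_n -> R) i j :
  (forall l, S l (s l)) ->
  (forall j (t : 'I_n -> R), (forall l, S l (t l)) -> 0 < v j t) ->
  0 <= lower_est S v s i j.
Proof.
move=> hS hv; apply: lb_le_inf.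
  exists (v j (upd s i (s i))); exists (s i) => //.
move=> y [] o So <-.
apply/ltW/hv => l; rewrite /upd.
by case: eqP => [->|].
Qed.

Lemma card_cls n (Q : 'I_n -> bool) :
  #|[set j | Q j]| = #|[set j | Q j]%SET|.
Proof. apply: eq_card => j; rewrite finset.inE /in_mem /= /in_set; exact: asboolb. Qed.

Lemma card_sumR n (Q : 'I_n -> bool) :
  (#|[set j | Q j]%SET|%:R : R) = \sum_j (if Q j then 1 else 0).
Proof.
rewrite -sum1_card big_mkcond /= natr_sum; apply: eq_bigr => j _.
by rewrite finset.inE; case: (Q j).
Qed.

Lemma measurable_cm n (S : 'I_n -> set R) (v : 'I_n -> ('I_n -> R) -> R) (s : 'I_n -> R)
  mm i p : measurable_fun [set: R] (fun r => cm S v s mm i r p).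
Proof.
rewrite /cm.
apply: measurable_fun_ifT; [|exact: measurable_cst|exact: measurable_cst].
set Q := fun j r => (j != i) && gtpi p (fr r (v i s)) i (fr r (lower_est S v s i j)) j.
have -> : (fun r => (n - mm <= #|[set j | (j != i) && gtpi p (fr r (v i s)) i (fr r (lower_est S v s i j)) j]|)%N)
   = (fun r => ((n - mm)%:R : R) <= \sum_j (if Q j r then 1 else 0)).
  by apply/funext => r; rewrite card_cls -card_sumR ler_nat.
apply: measurable_fun_ler; first exact: measurable_cst.
apply: measurable_sum => j.
apply: measurable_fun_ifT; [|exact: measurable_cst|exact: measurable_cst].
rewrite /Q /gtpi.
apply: measurable_and; first exact: measurable_cst.
apply: measurable_or; first exact: measurable_fun_ltr (measurable_fr _) (measurable_fr _).
apply: measurable_and; last exact: measurable_cst.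
exact: measurable_fun_eqr (measurable_fr _) (measurable_fr _).
Qed.

End Anal.

End FA.

Section FB.
Local Open Scope ring_scope.
Local Open Scope classical_set_scope.

Section Int.
Variables (R : realType) (n : nat).
Notation mu := (@lebesgue_measure R).

Lemma intG (c0 : R) (J : pred 'I_n) (c : 'I_n -> R) (X : 'I_n -> set R) (l : 'I_n -> R) :
  (forall j, measurable (X j)) -> (forall j, 0 <= c j) -> 0 <= c0 ->
  (forall j, J j -> (mu (X j `&` D0 R) <= (l j)%:E)%E) ->
  (\int[mu]_(r in D0 R) (c0 + \sum_(j < n | J j) c j * \1_(X j) r)%:E
     <= (c0 + \sum_(j < n | J j) c j * l j)%:E)%E.
Proof.
move=> mX c_ge0 c00 hl.
have mD := mD0 R.
have mS : forall j, measurable_fun (D0 R) (fun r => c j * \1_(X j) r).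
  by move=> j; apply: measurable_funM; [exact: measurable_cst|exact: measurable_indic].
have S0 : forall j r, 0 <= c j * \1_(X j) r by move=> j r; rewrite mulr_ge0.
under eq_integral do rewrite EFinD.
rewrite ge0_integralD //; first last.
- apply/measurable_EFinP.
  under eq_fun do rewrite big_mkcond /=.
  apply: measurable_sum => j; case: (J j); [exact: mS|exact: measurable_cst].
- by move=> r _; rewrite lee_fin sumr_ge0.
have lam1 : ((@lebesgue_measure R : measure _ R) (D0 R) = 1%:E)%E.
  exact: lamD0.
rewrite integral_cst // lam1 mule1 EFinD leeD2l //.
under eq_integral do rewrite big_mkcond -sumEFin /=.
rewrite ge0_integral_sum //; last 2 first.
- move=> j; case: (J j); last exact: measurable_cst.
  by apply/measurable_EFinP; exact: mS.
- by move=> j r _; case: (J j); rewrite // lee_fin.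
rewrite -sumEFin [X in (_ <= X)%E]big_mkcond /=; apply: lee_sum => j _.
case: (J j) (hl j) => [/(_ isT) hj|_]; last by rewrite integral0.
under eq_integral do rewrite EFinM.
rewrite ge0_integralZl_EFin //.
- have cj0 : (0 <= (c j)%:E)%E by rewrite lee_fin.
  have hj2 : ((@lebesgue_measure R : measure _ R) (X j `&` D0 R) <= (l j)%:E)%E := hj.
  rewrite integral_indic; last exact: mX.
  set MU := (X in ((_ * X) <= _)%E).
  have hj3 : (MU <= (l j)%:E)%E := hj.
  apply: (le_trans (lee_wpmul2l cj0 hj3)).
  by rewrite -EFinM.

- exact: mD.
- apply/measurable_EFinP; apply: measurable_indic; exact: mX.
Qed.
End Int.


End FB.

Local Open Scope ring_scope.
Local Open Scope classical_set_scope.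

Lemma ind_if (R : realType) (P : R -> bool) r :
  \1_[set x | P x] r = (if P r then 1 else 0 : R).
Proof. by rewrite /indic /in_mem /= /in_set asboolb; case: (P r). Qed.

Theorem mainTheorem17 (R : realType) (n : nat) (m : 'I_n)
  (S : 'I_n -> set R) (v : 'I_n -> ('I_n -> R) -> R) (s : 'I_n -> R) :
  (m.+1 < n)%N ->
  (forall l, S l (s l)) ->
  (forall j (t : 'I_n -> R), (forall l, S l (t l)) -> 0 < v j t) ->
  (forall i j : 'I_n, (i <= j)%N -> v j s <= v i s) ->
  forall i : 'I_n,
    Ecm S v s m.+1 i <=
      m.+1%:R / (i.+1 * i.+2)%:R
      + m.+1%:R / (kidx (fun l => v l s) m).+1%:R
      + \sum_(j < n | (j.+1 <= kidx (fun l => v l s) m)%N && (j != i))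
          m.+1%:R / (j.+1 * j.+2)%:R * log2dag_ratio (v i s) (lower_est S v s i j).
Proof.
move=> hm hS hv _ i.
set kk := kidx (fun l => v l s) m.
have kkn : (kk <= n)%N.
  by rewrite /kk /kidx; apply/bigmax_leqP => l _; exact: ltn_ord.
have a0 : 0 < v i s := hv i s hS.
have L0 : forall j, 0 <= lower_est S v s i j := fun j => @lower_ge0 R n S v s i j hS hv.
set M := m.+1.
have hM : (0 < M <= n)%N by rewrite /M ltnS leq0n (ltnW hm).
set X := fun j : 'I_n => [set r : R | (fr r (lower_est S v s i j) < fr r (v i s))%R].
set c0 : R := M%:R * w R i + M%:R * kk.+1%:R^-1.
set J := fun j : 'I_n => (j.+1 <= kk)%N && (j != i).
set G := fun r => c0 + \sum_(j < n | J j) (M%:R * w R j) * \1_(X j) r.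
have hpt : forall r, \sum_(p : {perm 'I_n}) cm S v s M i r p <= n`!%:R * G r.
  move=> r.
  have := @pointwise R n M (fr r (v i s)) (fun j => fr r (lower_est S v s i j)) i kk hM kkn.
  rewrite /G /c0 -addrA.
  have -> : \sum_(j < n | J j) M%:R * w R j * \1_(X j) r =
            \sum_(j < n | (j.+1 <= kk)%N && (j != i)) M%:R * w R j *
               (if fr r (lower_est S v s i j) < fr r (v i s) then 1 else 0).
    by apply: eq_bigr => j _; rewrite /X ind_if.
  rewrite addrA.
  have -> : \sum_(p : {perm 'I_n}) cm S v s M i r p =
    \sum_(p : {perm 'I_n}) (if (n - M <= #|[set j | (j != i) &&
        gtpi p (fr r (v i s)) i (fr r (lower_est S v s i j)) j]%SET|)%N then 1 else 0).
    by apply: eq_bigr => p _; rewrite /cm card_cls.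
  by [].
have mD := mD0 R.
have lam1 : ((@lebesgue_measure R : measure _ R) (D0 R) = 1%:E)%E by exact: lamD0.
have cm0 : forall r p, 0 <= cm S v s M i r p by move=> r p; rewrite /cm; case: ifP.
have cm1 : forall r p, cm S v s M i r p <= 1 by move=> r p; rewrite /cm; case: ifP.
have mcm : forall p, measurable_fun (D0 R) (fun r => cm S v s M i r p).
  by move=> p; apply: (measurable_funS measurableT) => //; exact: measurable_cm.
set I := fun p => (\int[@lebesgue_measure R]_(x in D0 R) (cm S v s M i x p)%:E)%E.
have I0 : forall p, (0 <= I p)%E.
  by move=> p; apply: integral_ge0 => x _; rewrite lee_fin.
have I1 : forall p, (I p <= 1%:E)%E.
  move=> p; rewrite -lam1 -(mul1e (_ (D0 R))) -integral_cst //.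
  apply: ge0_le_integral => //.
  - by move=> x _; rewrite lee_fin.
  - by apply/measurable_EFinP; exact: mcm.
  - by move=> x _; rewrite lee_fin.
have Ifin : forall p, I p \is a fin_num.
  by move=> p; rewrite ge0_fin_numE // (le_lt_trans (I1 p)) // ltry.
have eS : \sum_(p : {perm 'I_n}) Rintegral (@lebesgue_measure R) [set r : R | 0 <= r < 1]
            (fun r => cm S v s M i r p) = fine (\sum_(p : {perm 'I_n}) I p).
  by rewrite -sum_fine //.
rewrite /Ecm eS.
have hsum : (\sum_(p : {perm 'I_n}) I p =
    \int[@lebesgue_measure R]_(x in D0 R) (\sum_(p : {perm 'I_n}) cm S v s M i x p)%:E)%E.
  under [RHS]eq_integral do rewrite -sumEFin.
  rewrite ge0_integral_sum //.
  - by move=> p; apply/measurable_EFinP; exact: mcm.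
  - by move=> p x _; rewrite lee_fin.
have mG : measurable_fun (D0 R) G.
  apply: measurable_funD; first exact: measurable_cst.
  under eq_fun do rewrite big_mkcond /=.
  apply: measurable_sum => j; case: (J j); last exact: measurable_cst.
  apply: measurable_funM; first exact: measurable_cst.
  by apply: measurable_indic; exact: mX.
have hle : (\int[@lebesgue_measure R]_(x in D0 R) (\sum_(p : {perm 'I_n}) cm S v s M i x p)%:E
    <= \int[@lebesgue_measure R]_(x in D0 R) (n`!%:R * G x)%:E)%E.
  apply: ge0_le_integral => //.
  - by move=> x _; rewrite lee_fin sumr_ge0.
  - by apply/measurable_EFinP; exact: measurable_sum.
  - apply/measurable_EFinP; apply: measurable_funM => //; exact: measurable_cst.
  - by move=> x _; rewrite lee_fin hpt.
have hZ : (\int[@lebesgue_measure R]_(x in D0 R) (n`!%:R * G x)%:E =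
     (n`!%:R)%:E * \int[@lebesgue_measure R]_(x in D0 R) (G x)%:E)%E.
  under eq_integral do rewrite EFinM.
  rewrite ge0_integralZl_EFin //.
  - move=> x _; rewrite lee_fin /G addr_ge0 //.
      by rewrite /c0 addr_ge0 // mulr_ge0 // ?w_ge0 // invr_ge0.
    by apply: sumr_ge0 => j _; rewrite !mulr_ge0 // ?w_ge0 // indic_ge0.
  - by apply/measurable_EFinP.
have hG := @intG R n c0 J (fun j => M%:R * w R j) X
   (fun j => log2dag_ratio (v i s) (lower_est S v s i j)).
set Bnd := c0 + \sum_(j < n | J j) M%:R * w R j * log2dag_ratio (v i s) (lower_est S v s i j).
have hG' : (\int[@lebesgue_measure R]_(x in D0 R) (G x)%:E <= Bnd%:E)%E.
  apply: hG.
  - by move=> j; exact: mX.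
  - by move=> j; rewrite mulr_ge0 // w_ge0.
  - by rewrite /c0 addr_ge0 // mulr_ge0 // ?w_ge0 // invr_ge0.
  - by move=> j _; apply: strict_measure.
have nf0 : (0 : R) < n`!%:R by rewrite ltr0n fact_gt0.
have hfin : (\sum_(p : {perm 'I_n}) I p) \is a fin_num.
  by apply/sum_fin_numP => p _ _; exact: Ifin.
have htot : fine (\sum_(p : {perm 'I_n}) I p) <= n`!%:R * Bnd.
  rewrite -lee_fin fineK // EFinM hsum.
  apply: (le_trans hle); rewrite hZ.
  by apply: lee_wpmul2l => //; rewrite lee_fin ltW.
have : (n`!%:R)^-1 * fine (\sum_(p : {perm 'I_n}) I p) <= Bnd.
  rewrite -(ler_pM2l nf0) mulrA mulfV ?mul1r //; exact: lt0r_neq0.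
move=> h; apply: (le_trans h).
by rewrite /Bnd /c0 /J.
Qed.
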